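(* Let $G$ be a twin-free unit square graph, let $\mathcal{P}$ be a clique-stable partition of $V(G)$, and let $f$ be a realization of $G$. Then: (1) For each $X\in\mathcal{P}$ there is $b\in\{-1,1\}$ such that for all $v,w\in X$: $f(v)_1\le f(w)_1 \iff b\,f(v)_2\le b\,f(w)_2$. Call such $b$ the orientation $\mathrm{ori}_{G,f}(X)$ (it is unique if $|X|\ge2$; set $\mathrm{ori}_{G,f}(X)=1$ if $|X|=1$). (2) If $X,Y\in\mathcal{P}$ with $\mathrm{ori}_{G,f}(X)\ne\mathrm{ori}_{G,f}(Y)$, then either $xy\in E(G)$ for all $x\in X,y\in Y$, or $xy\notin E(G)$ for all $x\in X,y\in Y$. (3) Let $X\ne Y\in\mathcal{P}$ with $\mathrm{ori}_{G,f}(X)=\mathrm{ori}_{G,f}(Y)$ and let $k=|\{(x,y)\in X\times Y\mid xy\in E(G)\}|\ge1$. Write $X=\{x_1,\dots,x_s\}$ with $f(x_i)_1\le f(x_{i+1})_1$ for all $i<s$ and $Y=\{y_1,\dots,y_t\}$ with $f(y_j)_1\le f(y_{j+1})_1$ for all $j<t$. Then for all $i\in[s],j\in[t]$: $x_iy_j\in E(G)\iff \lceil it/k\rceil=\lceil js/k\rceil$.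
   Context: A realization of $G$ is $f\colon V(G)\to\mathbb{R}^2$ with $vw\in E(G)$ iff $\|f(v)-f(w)\|_\infty\le1$ for distinct $v,w$; a unit square graph is a graph with a realization. $G$ is twin-free if there are no distinct $v,w$ with $N[v]=N[w]$. $\mathcal{M}(G)$ is the set of maximal cliques. $G^*_{\mathcal{M}}$ is the graph on $V(G)\sqcup\mathcal{M}(G)$ with edge set $E(G)\cup\{vC\mid C\in\mathcal{M}(G),v\in C\}$. A partition $\mathcal{Q}$ of the vertex set of a graph $H$ is stable if for all $X,Y\in\mathcal{Q}$ and $v,w\in X$, $|N_H(v)\cap Y|=|N_H(w)\cap Y|$. A partition $\mathcal{P}$ of $V(G)$ into cliques is clique-stable if, letting $\mathcal{P}^*$ be the coarsest partition of $V(G)\cup\mathcal{M}(G)$ that is stable with respect to $G^*_{\mathcal{M}}$ and refines $\mathcal{P}\cup\{\mathcal{M}(G)\}$, one has $\{Z\in\mathcal{P}^*\mid Z\subseteq V(G)\}=\mathcal{P}$. *)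

(* Defs.v *)
From HB Require Import structures.
From mathcomp Require Import all_boot.
From Stdlib Require Import Reals.
Set Implicit Arguments. Unset Strict Implicit. Unset Printing Implicit Defensive.

Section UnitSquare.
Variable T : finType.
Variable e : rel T.

Definition simple_graph : Prop := symmetric e /\ irreflexive e.

Definition closed_nbhd (v : T) : {set T} := [set w | (w == v) || e v w].

Definition twin_free : Prop :=
  forall v w : T, closed_nbhd v = closed_nbhd w -> v = w.

Definition cliqueb (C : {set T}) : bool :=
  [forall x in C, forall y in C, (x != y) ==> e x y].

Definition maxcliqueb (C : {set T}) : bool :=
  cliqueb C && [forall D : {set T}, (cliqueb D && (C \subset D)) ==> (D == C)].

(* The graph G*_M on V(G) ⊔ M(G), encoded inside the type T + {set T}. *)
Definition starT : finType := (T + {set T})%type.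

Definition starV : {set starT} :=
  [set u : starT | match u with inl _ => true | inr C => maxcliqueb C end].

Definition starE (u w : starT) : bool :=
  match u, w with
  | inl v, inl x => e v x
  | inl v, inr C => (v \in C) && maxcliqueb C
  | inr C, inl v => (v \in C) && maxcliqueb C
  | inr _, inr _ => false
  end.

Definition stable (Q : {set {set starT}}) : Prop :=
  forall X Y, X \in Q -> Y \in Q -> forall v w, v \in X -> w \in X ->
    #|[set u in Y | starE v u]| = #|[set u in Y | starE w u]|.

Definition refines (Q Q' : {set {set starT}}) : Prop :=
  forall X, X \in Q -> exists2 Y, Y \in Q' & X \subset Y.

Definition inl_block (X : {set T}) : {set starT} := [set (inl x : starT) | x in X].

Definition Mblock : {set starT} :=
  [set (inr C : starT) | C in [set C : {set T} | maxcliqueb C]].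

Definition Pinit (P : {set {set T}}) : {set {set starT}} :=
  (inl_block @: P) :|: [set Mblock].

Definition coarsest_stable_refinement (Pst : {set {set starT}}) (P : {set {set T}}) : Prop :=
  [/\ partition Pst starV, stable Pst, refines Pst (Pinit P) &
      forall Q, partition Q starV -> stable Q -> refines Q (Pinit P) -> refines Q Pst].

Definition clique_partition (P : {set {set T}}) : Prop :=
  partition P [set: T] /\ forall X, X \in P -> cliqueb X.

Definition clique_stable (P : {set {set T}}) : Prop :=
  clique_partition P /\
  exists Pst, coarsest_stable_refinement Pst P /\
    [set Z in Pst | Z \subset inl_block [set: T]] = inl_block @: P.

Definition realization (f : T -> (R * R)%type) : Prop :=
  forall v w : T, v != w ->
    (e v w <-> Rle (Rmax (Rabs (Rminus (f v).1 (f w).1))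
                         (Rabs (Rminus (f v).2 (f w).2))) R1).

End UnitSquare.

Definition is_orientation (T : finType) (f : T -> (R * R)%type) (X : {set T}) (b : R) : Prop :=
  (b = R1 \/ b = Ropp R1) /\
  forall v w, v \in X -> w \in X ->
    (Rle (f v).1 (f w).1 <-> Rle (Rmult b (f v).2) (Rmult b (f w).2)).

Definition ori_spec (T : finType) (f : T -> (R * R)%type) (X : {set T}) (b : R) : Prop :=
  is_orientation f X b /\ (#|X| <= 1 -> b = R1).

(* ceil(a / k) for k >= 1 *)
Definition ceil_div (a k : nat) : nat := (a + k.-1) %/ k.

(* Main.v *)
Require Import Defs.
From HB Require Import structures.
From mathcomp Require Import all_boot.
From mathcomp Require Import zify.
From Stdlib Require Import Reals Lra Lia Classical.
Set Implicit Arguments. Unset Strict Implicit. Unset Printing Implicit Defensive.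

Lemma adjE (T : finType) (e : rel T) (f : T -> (R * R)%type) v w :
  realization e f -> v != w ->
  (e v w <-> (Rle (-1) ((f v).1 - (f w).1) /\ Rle ((f v).1 - (f w).1) 1 /\
              Rle (-1) ((f v).2 - (f w).2) /\ Rle ((f v).2 - (f w).2) 1)%R).
Proof.
move=> Hr Hvw; rewrite (Hr _ _ Hvw); split.
- move=> H.
  have H1 := Rle_trans _ _ _ (Rmax_l _ _) H.
  have H2 := Rle_trans _ _ _ (Rmax_r _ _) H.
  have a1 := Rle_abs ((f v).1 - (f w).1).
  have a2 := Rle_abs (- ((f v).1 - (f w).1)). rewrite Rabs_Ropp in a2.
  have a3 := Rle_abs ((f v).2 - (f w).2).
  have a4 := Rle_abs (- ((f v).2 - (f w).2)). rewrite Rabs_Ropp in a4.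
  lra.
- move=> [h1 [h2 [h3 h4]]]. apply: Rmax_lub; apply: Rabs_le; lra.
Qed.

Definition NS (T : finType) (e : rel T) (Y : {set T}) (x : T) : {set T} := [set y in Y | e x y].

Lemma stabP (T : finType) (e : rel T) (P : {set {set T}}) X Y x x' :
  clique_stable e P -> X \in P -> Y \in P -> x \in X -> x' \in X ->
  #|NS e Y x| = #|NS e Y x'|.
Proof.
move=> [_ [Pst [[_ Hst _ _] Heq]]] HX HY Hx Hx'.
have inP : forall Z, Z \in P -> inl_block Z \in Pst.
  move=> Z HZ. have : inl_block Z \in [set inl_block z | z in P] by apply: imset_f.
  by rewrite -Heq inE => /andP[].
have key : forall v, [set u in inl_block Y | starE e (inl v) u] = inl @: NS e Y v.
  move=> v; apply/setP => u; rewrite inE; case: u => [y|C] /=.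
  - rewrite /inl_block mem_imset; last exact: inl_inj.
    rewrite mem_imset; last exact: inl_inj.
    by rewrite /NS inE.
  - apply/idP/idP.
    + by move=> /andP[/imsetP[z _ ]].
    + by move/imsetP=> [z _].
have := Hst _ _ (inP _ HX) (inP _ HY) (inl x) (inl x').
rewrite !key !card_imset; try exact: inl_inj.
apply; apply: imset_f => //.
Qed.

Lemma coverP (T : finType) (e : rel T) (P : {set {set T}}) w :
  clique_stable e P -> exists2 Y, Y \in P & w \in Y.
Proof.
move=> [[/and3P[/eqP Hc _ _] _] _].
have : w \in cover P by rewrite Hc inE.
by move/bigcupP=> [Y HY Hw]; exists Y.
Qed.

Lemma disjP (T : finType) (e : rel T) (P : {set {set T}}) X Y x y :
  clique_stable e P -> X \in P -> Y \in P -> X != Y -> x \in X -> y \in Y -> x != y.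
Proof.
move=> [[/and3P[_ Ht _] _] _] HX HY HXY Hx Hy.
have := (trivIsetP Ht) _ _ HX HY HXY.
move/disjointFr => H. apply/eqP => Exy; subst y. by rewrite (H _ Hx) in Hy.
Qed.

Lemma cliqueP (T : finType) (e : rel T) (P : {set {set T}}) X x x' :
  clique_stable e P -> X \in P -> x \in X -> x' \in X -> x != x' -> e x x'.
Proof.
move=> [[_ Hcl] _] HX Hx Hx' Hne.
have := Hcl _ HX. move=> /forallP /(_ x) /implyP /(_ Hx) /forallP /(_ x') /implyP /(_ Hx').
by move/implyP; apply.
Qed.

Lemma clbound (T : finType) (e : rel T) (P : {set {set T}}) f X x x' :
  clique_stable e P -> realization e f -> X \in P -> x \in X -> x' \in X ->
  (Rle (-1) ((f x).1 - (f x').1) /\ Rle ((f x).1 - (f x').1) 1 /\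
   Rle (-1) ((f x).2 - (f x').2) /\ Rle ((f x).2 - (f x').2) 1)%R.
Proof.
move=> Hcs Hr HX Hx Hx'.
case: (eqVneq x x') => [->|Hne]; first by (repeat split; lra).
apply: (proj1 (adjE Hr Hne)); exact: (cliqueP Hcs HX).
Qed.

Lemma sepP (T : finType) (e : rel T) (P : {set {set T}}) X x x' :
  simple_graph e -> twin_free e -> clique_stable e P -> X \in P -> x \in X -> x' \in X ->
  (forall Y, Y \in P -> Y != X -> NS e Y x = NS e Y x') -> x = x'.
Proof.
move=> [Hsym Hirr] Htf Hcs HX Hx Hx' H.
case: (eqVneq x x') => [//|Hne].
apply: Htf; apply/setP => w; rewrite !inE.
case: (boolP (w \in X)) => Hw.
- case: (eqVneq w x) => [Ewx|Hwx] /=.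
  + subst w. by rewrite (cliqueP Hcs HX Hx' Hx) ?orbT // eq_sym.
  + case: (eqVneq w x') => [Ewx|Hwx'] /=. subst w. by rewrite (cliqueP Hcs HX Hx Hx').
    by rewrite (cliqueP Hcs HX Hx Hw) ?(cliqueP Hcs HX Hx' Hw) // eq_sym.
- have [Y HY HwY] := coverP w Hcs.
  have HYX : Y != X by apply/eqP => E; subst Y; rewrite HwY in Hw.
  have := H _ HY HYX => /setP /(_ w); rewrite !inE HwY /=.
  have -> : (w == x) = false by apply/negbTE; apply/eqP => E; subst w; rewrite Hx in Hw.
  have -> : (w == x') = false by apply/negbTE; apply/eqP => E; subst w; rewrite Hx' in Hw.
  by [].
Qed.

Definition bnd (p q : R * R) : Prop :=
  (Rle (-1) (p.1 - q.1) /\ Rle (p.1 - q.1) 1 /\ Rle (-1) (p.2 - q.2) /\ Rle (p.2 - q.2) 1)%R.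

Lemma rowinc (T : finType) (e : rel T) (P : {set {set T}}) f X Y x x' :
  clique_stable e P -> realization e f -> X \in P -> Y \in P -> X != Y ->
  x \in X -> x' \in X ->
  (forall y, y \in Y -> bnd (f x) (f y) -> bnd (f x') (f y)) ->
  NS e Y x = NS e Y x'.
Proof.
move=> Hcs Hr HX HY HXY Hx Hx' H.
apply/eqP; rewrite eqEcard (stabP Hcs HX HY Hx' Hx) leqnn andbT.
apply/subsetP => y; rewrite !inE => /andP[Hy Hxy]; rewrite Hy /=.
apply/(adjE Hr (disjP Hcs HX HY HXY Hx' Hy)).
apply: H => //. exact/(adjE Hr (disjP Hcs HX HY HXY Hx Hy)).
Qed.

Definition dom (p q : R * R) : Prop := (Rle p.1 q.1 /\ Rle p.2 q.2)%R.
Definition anti (p q : R * R) : Prop := (Rle p.1 q.1 /\ Rle q.2 p.2)%R.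

Definition KD (T : finType) (e : rel T) f (X Y : {set T}) : Prop :=
  (forall x x', x \in X -> x' \in X -> dom (f x) (f x') -> NS e Y x = NS e Y x') /\
  (forall y y', y \in Y -> y' \in Y -> dom (f y) (f y') -> NS e X y = NS e X y').
Definition KA (T : finType) (e : rel T) f (X Y : {set T}) : Prop :=
  (forall x x', x \in X -> x' \in X -> anti (f x) (f x') -> NS e Y x = NS e Y x') /\
  (forall y y', y \in Y -> y' \in Y -> anti (f y) (f y') -> NS e X y = NS e X y').

Lemma L1 (T : finType) (e : rel T) (P : {set {set T}}) f X Y :
  clique_stable e P -> realization e f -> X \in P -> Y \in P ->
  (forall x y, x \in X -> y \in Y -> Rle (f x).1 ((f y).1 + 1)) \/
  (forall x y, x \in X -> y \in Y -> Rle (f y).1 ((f x).1 + 1)).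
Proof.
move=> Hcs Hr HX HY.
case: (classic (exists x y, x \in X /\ y \in Y /\ Rlt ((f y).1 + 1) (f x).1)%R).
- move=> [x0 [y0 [hx0 [hy0 h]]]]; right => x y hx hy.
  have := clbound Hcs Hr HX hx hx0. have := clbound Hcs Hr HY hy hy0. lra.
- move=> nex; left => x y hx hy. apply: Rnot_lt_le => h; apply: nex; exists x, y; tauto.
Qed.

Lemma L2 (T : finType) (e : rel T) (P : {set {set T}}) f X Y :
  clique_stable e P -> realization e f -> X \in P -> Y \in P ->
  (forall x y, x \in X -> y \in Y -> Rle (f x).2 ((f y).2 + 1)) \/
  (forall x y, x \in X -> y \in Y -> Rle (f y).2 ((f x).2 + 1)).
Proof.
move=> Hcs Hr HX HY.
case: (classic (exists x y, x \in X /\ y \in Y /\ Rlt ((f y).2 + 1) (f x).2)%R).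
- move=> [x0 [y0 [hx0 [hy0 h]]]]; right => x y hx hy.
  have := clbound Hcs Hr HX hx hx0. have := clbound Hcs Hr HY hy hy0. lra.
- move=> nex; left => x y hx hy. apply: Rnot_lt_le => h; apply: nex; exists x, y; tauto.
Qed.

Lemma kinds (T : finType) (e : rel T) (P : {set {set T}}) f X Y :
  simple_graph e -> clique_stable e P -> realization e f -> X \in P -> Y \in P -> X != Y ->
  KD e f X Y \/ KA e f X Y.
Proof.
move=> [Hsym _] Hcs Hr HX HY HXY.
have HYX : Y != X by rewrite eq_sym.
have ro : forall x x', x \in X -> x' \in X ->
   (forall y, y \in Y -> bnd (f x) (f y) -> bnd (f x') (f y)) \/
   (forall y, y \in Y -> bnd (f x') (f y) -> bnd (f x) (f y)) ->
   NS e Y x = NS e Y x'.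
  move=> x x' hx hx' [H|H]; first exact: rowinc Hcs Hr HX HY HXY hx hx' H.
  by symmetry; apply: rowinc Hcs Hr HX HY HXY hx' hx H.
have co : forall y y', y \in Y -> y' \in Y ->
   (forall x, x \in X -> bnd (f y) (f x) -> bnd (f y') (f x)) \/
   (forall x, x \in X -> bnd (f y') (f x) -> bnd (f y) (f x)) ->
   NS e X y = NS e X y'.
  move=> y y' hy hy' [H|H]; first exact: rowinc Hcs Hr HY HX HYX hy hy' H.
  by symmetry; apply: rowinc Hcs Hr HY HX HYX hy' hy H.
case: (L1 Hcs Hr HX HY) => h1; case: (L2 Hcs Hr HX HY) => h2;
 [left|right|right|left]; split;
 first
 [ move=> x x' hx hx' [d1 d2]; apply: ro => //; rewrite /bnd;
   first [ left => y hy; have := h1 _ _ hx' hy; have := h2 _ _ hx' hy; lra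
         | right => y hy; have := h1 _ _ hx hy; have := h2 _ _ hx hy; lra ]
 | move=> y y' hy hy' [d1 d2]; apply: co => //; rewrite /bnd;
   first [ left => x hx; have := h1 _ _ hx hy'; have := h2 _ _ hx hy'; lra
         | right => x hx; have := h1 _ _ hx hy; have := h2 _ _ hx hy; lra ] ].
Qed.

Definition DD (p q : R * R) : Prop := dom p q \/ dom q p.
Definition AA (p q : R * R) : Prop := anti p q \/ anti q p.

Lemma totDA p q : DD p q \/ AA p q.
Proof.
rewrite /DD /AA /dom /anti.
case: (Rle_or_lt p.1 q.1) => h1; case: (Rle_or_lt p.2 q.2) => h2.
- by left; left.
- right; left; split; lra.
- right; right; split; lra.
- left; right; split; lra.
Qed.

Lemma Krow (T : finType) (e : rel T) (P : {set {set T}}) f X Y :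
  simple_graph e -> clique_stable e P -> realization e f -> X \in P -> Y \in P -> Y != X ->
  (forall x x', x \in X -> x' \in X -> DD (f x) (f x') -> NS e Y x = NS e Y x') \/
  (forall x x', x \in X -> x' \in X -> AA (f x) (f x') -> NS e Y x = NS e Y x').
Proof.
move=> Hs Hcs Hr HX HY HYX.
have HXY : X != Y by rewrite eq_sym.
case: (kinds Hs Hcs Hr HX HY HXY) => [[H _]|[H _]]; [left|right];
  move=> x x' hx hx' [d|d]; [exact: H| symmetry; exact: H|exact: H| symmetry; exact: H].
Qed.

Lemma ori_exists (T : finType) (e : rel T) (P : {set {set T}}) f X :
  simple_graph e -> twin_free e -> clique_stable e P -> realization e f -> X \in P ->
  exists b, is_orientation f X b.
Proof.
move=> Hs Htf Hcs Hr HX.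
have K := fun (Y : {set T}) (hY : Y \in P) (hYX : Y != X) => Krow Hs Hcs Hr HX hY hYX.
have both : forall x x', x \in X -> x' \in X -> DD (f x) (f x') -> AA (f x) (f x') -> x = x'.
  move=> x x' hx hx' hD hA; apply: (sepP Hs Htf Hcs HX hx hx') => Y hY hYX.
  by case: (K Y hY hYX) => H; apply: H.
case: (classic (exists q q', q \in X /\ q' \in X /\ ~ DD (f q) (f q'))) =>
  [[q [q' [hq [hq' nDq]]]] | nD]; last first.
  exists R1; split; first by left.
  move=> v w hv hw; rewrite !Rmult_1_l.
  have hD : forall v w, v \in X -> w \in X -> DD (f v) (f w).
    move=> v' w' hv' hw'; apply: NNPP => hn; apply: nD; by exists v', w'.
  split => h.
  - case: (hD v w hv hw) => [[a b]|[a b]] //.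
    case: (Rle_or_lt (f v).2 (f w).2) => // c.
    have E := both v w hv hw (hD v w hv hw) (or_introl (conj h (Rlt_le _ _ c))).
    subst w; lra.
  - case: (hD v w hv hw) => [[a b]|[a b]] //.
    case: (Rle_or_lt (f v).1 (f w).1) => // c.
    have E := both v w hv hw (hD v w hv hw) (or_intror (conj (Rlt_le _ _ c) h)).
    subst w; lra.
case: (classic (exists p p', p \in X /\ p' \in X /\ ~ AA (f p) (f p'))) =>
  [[p [p' [hp [hp' nAp]]]] | nA]; last first.
  exists (Ropp R1); split; first by right.
  have hA : forall v w, v \in X -> w \in X -> AA (f v) (f w).
    move=> v' w' hv' hw'; apply: NNPP => hn; apply: nA; by exists v', w'.
  move=> v w hv hw.
  split => h.
  - case: (hA v w hv hw) => [[a b]|[a b]].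
    + lra.
    + case: (Rle_or_lt (f w).2 (f v).2) => c; first lra.
      have E := both v w hv hw (or_introl (conj h (Rlt_le _ _ c))) (hA v w hv hw).
      subst w; lra.
  - have h' : Rle (f w).2 (f v).2 by lra.
    case: (hA v w hv hw) => [[a b]|[a b]] //.
    case: (Rle_or_lt (f v).1 (f w).1) => // c.
    have E := both v w hv hw (or_intror (conj (Rlt_le _ _ c) h')) (hA v w hv hw).
    subst w; lra.
exfalso.
have domrefl : forall r, DD r r by move=> r; left; split; apply: Rle_refl.
have antirefl : forall r, AA r r by move=> r; left; split; apply: Rle_refl.
have sep : forall x x', x \in X -> x' \in X -> x <> x' ->
    exists Y, Y \in P /\ Y != X /\ NS e Y x <> NS e Y x'.
  move=> x x' hx hx' hne; apply: NNPP => H; apply: hne.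
  apply: (sepP Hs Htf Hcs HX hx hx') => Y hY hYX.
  apply: NNPP => hn; apply: H; by exists Y.
have Aq : AA (f q) (f q') by case: (totDA (f q) (f q')).
have Dp : DD (f p) (f p') by case: (totDA (f p) (f p')).
have [Y0 [hY0 [hY0X hne0]]] : exists Y, Y \in P /\ Y != X /\ NS e Y q <> NS e Y q'.
  apply: sep => // E; subst q'; exact: nDq.
have KD0 : forall x x', x \in X -> x' \in X -> DD (f x) (f x') -> NS e Y0 x = NS e Y0 x'.
  case: (K Y0 hY0 hY0X) => // H; by have := H q q' hq hq' Aq.
have const : forall Y, Y \in P -> Y != X ->
    (forall x x', x \in X -> x' \in X -> AA (f x) (f x') -> NS e Y x = NS e Y x') ->
    forall x, x \in X -> NS e Y x = NS e Y q.
  move=> Y hY hYX HA x hx.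
  case: (totDA (f x) (f q)) => hxq; last exact: HA.
  case: (totDA (f x) (f q')) => hxq'.
  - exfalso; apply: hne0.
    by rewrite -(KD0 _ _ hx hq hxq) (KD0 _ _ hx hq' hxq').
  - by rewrite (HA _ _ hx hq' hxq') (HA _ _ hq hq' Aq).
have [Y1 [hY1 [hY1X hne1]]] : exists Y, Y \in P /\ Y != X /\ NS e Y p <> NS e Y p'.
  apply: sep => // E; subst p'; exact: nAp.
case: (K Y1 hY1 hY1X) => H.
- by apply: hne1; apply: H.
- apply: hne1. by rewrite (const _ hY1 hY1X H _ hp) (const _ hY1 hY1X H _ hp').
Qed.

Lemma sameptP (T : finType) (e : rel T) f v w :
  twin_free e -> realization e f -> f v = f w -> v = w.
Proof.
move=> Htf Hr E.
case: (eqVneq v w) => [//|Hne].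
have Hvw : e v w by apply/(adjE Hr Hne); rewrite E; repeat split; lra.
have Hne' : w != v by rewrite eq_sym.
have Hwv : e w v by apply/(adjE Hr Hne'); rewrite E; repeat split; lra.
apply: Htf; apply/setP => z; rewrite !inE.
case: (eqVneq z v) => [Ez|Hzv]; first by subst z; rewrite Hwv orbT.
case: (eqVneq z w) => [Ez|Hzw]; first by subst z; rewrite Hvw.
rewrite /=.
have Hvz : v != z by rewrite eq_sym.
have Hwz : w != z by rewrite eq_sym.
apply/idP/idP => H.
- apply/(adjE Hr Hwz); rewrite -E; exact/(adjE Hr Hvz).
- apply/(adjE Hr Hvz); rewrite E; exact/(adjE Hr Hwz).
Qed.

Lemma two_ori (T : finType) f (X : {set T}) v w :
  (forall v w, v \in X -> w \in X ->
    (Rle (f v).1 (f w).1 <-> Rle (Rmult R1 (f v).2) (Rmult R1 (f w).2))) ->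
  (forall v w, v \in X -> w \in X ->
    (Rle (f v).1 (f w).1 <-> Rle (Rmult (Ropp R1) (f v).2) (Rmult (Ropp R1) (f w).2))) ->
  v \in X -> w \in X -> f v = f w.
Proof.
move=> Hb Hb' hv hw.
have h1 := Hb v w hv hw. have h2 := Hb w v hw hv.
have h3 := Hb' v w hv hw. have h4 := Hb' w v hw hv.
move: h1 h2 h3 h4.
case: (f v) => [v1 v2]; case: (f w) => [w1 w2] /= h1 h2 h3 h4.
case: (Rle_or_lt v1 w1) => c.
- have a := proj1 h1 c. have b := proj1 h3 c.
  have c2 : Rle (R1 * w2) (R1 * v2) by lra.
  have c3 := proj2 h2 c2. f_equal; lra.
- have c' : Rle w1 v1 by lra.
  have a := proj1 h2 c'. have b := proj1 h4 c'.
  have c2 : Rle (R1 * v2) (R1 * w2) by lra.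
  have c3 := proj2 h1 c2. f_equal; lra.
Qed.

Lemma ori_unique (T : finType) (e : rel T) f (X : {set T}) b b' :
  twin_free e -> realization e f -> 1 < #|X| ->
  is_orientation f X b -> is_orientation f X b' -> b = b'.
Proof.
move=> Htf Hr /card_gt1P [v [w [hv hw hne]]] [hb Hb] [hb' Hb'].
case: hb => Eb; case: hb' => Eb'; subst; rewrite // ; exfalso; move/eqP: hne; apply;
 apply: (sameptP Htf Hr).
- exact: (two_ori Hb Hb').
- exact: (two_ori Hb' Hb).
Qed.

Lemma rowsEq (T : finType) (e : rel T) (P : {set {set T}}) X Y :
  simple_graph e -> clique_stable e P -> X \in P -> Y \in P ->
  (forall x x', x \in X -> x' \in X -> NS e Y x = NS e Y x') ->
  (forall x y, x \in X -> y \in Y -> e x y) \/ (forall x y, x \in X -> y \in Y -> ~~ e x y).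
Proof.
move=> [Hsym _] Hcs HX HY H.
case: (classic (exists x0, x0 \in X)) => [[x0 hx0]|nx]; last first.
  by left => x y hx; exfalso; apply: nx; exists x.
case: (classic (forall y, y \in Y -> e x0 y)) => [Hall|Hn].
  left => x y hx hy.
  have : y \in NS e Y x0 by rewrite inE hy Hall.
  by rewrite (H _ _ hx0 hx) inE => /andP[].
have [y0 [hy0 ny0]] : exists y0, y0 \in Y /\ ~ e x0 y0.
  apply: NNPP => hn; apply: Hn => y hy; apply: NNPP => hh; apply: hn; by exists y.
right => x y hx hy; apply/negP => hxy.
have E1 : NS e X y = X.
  apply/setP => x'; rewrite inE; case: (boolP (x' \in X)) => //= hx'.
  have : y \in NS e Y x by rewrite inE hy hxy.
  by rewrite (H _ _ hx hx') inE Hsym => /andP[].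
have E2 : NS e X y0 = set0.
  apply/setP => x'; rewrite !inE; apply/negP => /andP[hx' h].
  apply: ny0.
  have : y0 \in NS e Y x' by rewrite inE hy0 -Hsym.
  by rewrite (H _ _ hx' hx0) inE => /andP[].
have := stabP Hcs HY HX hy hy0.
rewrite E1 E2 cards0 => /eqP; rewrite cards_eq0 => /eqP EX.
by rewrite EX inE in hx0.
Qed.

Lemma ori1D (T : finType) f (X : {set T}) :
  is_orientation f X R1 -> forall v w, v \in X -> w \in X -> DD (f v) (f w).
Proof.
move=> [_ H] v w hv hw.
case: (Rle_or_lt (f v).1 (f w).1) => c.
- have := proj1 (H v w hv hw) c. rewrite !Rmult_1_l => c2. by left.
- have c' : Rle (f w).1 (f v).1 by lra.
  have := proj1 (H w v hw hv) c'. rewrite !Rmult_1_l => c2. by right.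
Qed.

Lemma orimA (T : finType) f (X : {set T}) :
  is_orientation f X (Ropp R1) -> forall v w, v \in X -> w \in X -> AA (f v) (f w).
Proof.
move=> [_ H] v w hv hw.
case: (Rle_or_lt (f v).1 (f w).1) => c.
- have := proj1 (H v w hv hw) c => c2. left; split => //; lra.
- have c' : Rle (f w).1 (f v).1 by lra.
  have := proj1 (H w v hw hv) c' => c2. right; split => //; lra.
Qed.

Lemma part2 (T : finType) (e : rel T) (P : {set {set T}}) f X Y bX bY :
  simple_graph e -> twin_free e -> clique_stable e P -> realization e f ->
  X \in P -> Y \in P -> ori_spec f X bX -> ori_spec f Y bY -> bX <> bY ->
  (forall x y, x \in X -> y \in Y -> e x y) \/ (forall x y, x \in X -> y \in Y -> ~~ e x y).
Proof.
move=> Hs Htf Hcs Hr HX HY [oX sX] [oY sY] Hne.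
case: (eqVneq X Y) => [E|HXY].
  subst Y; exfalso; apply: Hne.
  case: (leqP #|X| 1) => c; first by rewrite sX // sY.
  exact: (ori_unique Htf Hr c oX oY).
have HYX : Y != X by rewrite eq_sym.
have swap : ((forall y x, y \in Y -> x \in X -> e y x) \/ (forall y x, y \in Y -> x \in X -> ~~ e y x)) ->
   (forall x y, x \in X -> y \in Y -> e x y) \/ (forall x y, x \in X -> y \in Y -> ~~ e x y).
  case: Hs => Hsym _.
  by case=> H; [left|right] => x y hx hy; rewrite Hsym; apply: H.
have rX : (forall x x', x \in X -> x' \in X -> NS e Y x = NS e Y x') ->
  (forall x y, x \in X -> y \in Y -> e x y) \/ (forall x y, x \in X -> y \in Y -> ~~ e x y).
  exact: rowsEq Hs Hcs HX HY.
have rY : (forall y y', y \in Y -> y' \in Y -> NS e X y = NS e X y') ->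
  (forall x y, x \in X -> y \in Y -> e x y) \/ (forall x y, x \in X -> y \in Y -> ~~ e x y).
  move=> H; apply: swap; exact: rowsEq Hs Hcs HY HX H.
case: (kinds Hs Hcs Hr HX HY HXY) => [[K1 K2]|[K1 K2]].
- case: (proj1 oX) => EbX.
  + subst bX; apply: rX => x x' hx hx'.
    case: (ori1D oX hx hx') => d; [exact: K1| symmetry; exact: K1].
  + case: (proj1 oY) => EbY; last by subst; exfalso; apply: Hne.
    subst bY; apply: rY => y y' hy hy'.
    case: (ori1D oY hy hy') => d; [exact: K2| symmetry; exact: K2].
- case: (proj1 oX) => EbX.
  + case: (proj1 oY) => EbY; first by subst; exfalso; apply: Hne.
    subst bY; apply: rY => y y' hy hy'.
    case: (orimA oY hy hy') => d; [exact: K2| symmetry; exact: K2].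
  + subst bX; apply: rX => x x' hx hx'.
    case: (orimA oX hx hx') => d; [exact: K1| symmetry; exact: K1].
Qed.

Lemma cnt_mono (P Q : pred nat) (l : seq nat) :
  (forall x, x \in l -> P x -> Q x) -> count P l <= count Q l.
Proof.
elim: l => //= a l IH H.
rewrite leq_add //; last by apply: IH => x hx; apply: H; rewrite inE hx orbT.
case: (boolP (P a)) => //= hp; by rewrite (H a (mem_head _ _) hp).
Qed.

Lemma cnt0 (P : pred nat) m k :
  (forall x, m <= x < m + k -> ~~ P x) -> count P (iota m k) = 0.
Proof.
move=> H; apply/eqP; rewrite -leqn0.
have -> : 0 = count pred0 (iota m k) by rewrite count_pred0.
apply: cnt_mono => x; rewrite mem_iota => hx hp.
by move: (H x hx); rewrite hp.
Qed.

Lemma cnt_int a b n : a <= b -> b <= n ->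
  count (fun x => (a <= x) && (x < b)) (iota 0 n) = b - a.
Proof.
move=> hab hbn.
have -> : n = a + (b - a) + (n - b) by rewrite subnKC // subnKC.
rewrite !iotaD !count_cat add0n.
rewrite (@cnt0 _ 0 a); last by move=> x /andP[_ hx]; rewrite /= leqNgt hx.
rewrite (@cnt0 _ (a + (b - a))); last first.
  move=> x /andP[hx _]; rewrite subnKC // in hx; by rewrite /= ltnNge hx andbF.
rewrite addn0 add0n.
rewrite (@eq_in_count _ _ predT); last first.
  move=> x; rewrite mem_iota subnKC // => /andP[h1 h2]; by rewrite /= h1 h2.
by rewrite count_predT size_iota.
Qed.

Lemma divchar x d q : 0 < d -> (x %/ d == q) = (q * d <= x) && (x < q.+1 * d).
Proof.
move=> hd; rewrite eqn_leq -ltnS ltn_divLR // leq_divRL // andbC.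
by [].
Qed.

Lemma split_cnt (P : pred nat) i s : i <= s ->
  count P (iota 0 s) = count P (iota 0 i) + count P (iota i (s - i)).
Proof. by move=> h; rewrite -{1}(subnKC h) iotaD count_cat. Qed.

Lemma block (s t dX dY : nat) (E : nat -> nat -> bool) :
  0 < dX -> 0 < dY ->
  (forall i, i < s -> count (E i) (iota 0 t) = dX) ->
  (forall j, j < t -> count (fun i => E i j) (iota 0 s) = dY) ->
  (forall i i' j j', i <= i' -> i' < s -> j <= j' -> j' < t -> E i j' -> E i' j -> E i j) ->
  (forall i j j' j'', i < s -> j <= j' -> j' <= j'' -> j'' < t -> E i j -> E i j'' -> E i j') ->
  forall i, i < s -> forall j, j < t -> E i j = (i %/ dY == j %/ dX).
Proof.
move=> hdX hdY Hr Hc HX Hrow.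
elim/ltn_ind => i IH his.
have IH' : forall i' j, i' < i -> j < t -> E i' j = (i' %/ dY == j %/ dX).
  move=> i' j h hj; apply: IH => //; exact: ltn_trans h his.
set p := i %/ dY.
have hi1 : p * dY <= i by apply: leq_divM.
have hi2 : i < p.+1 * dY by apply: ltn_ceil.
have Ha : forall j, j < t -> j %/ dX < p -> ~~ E i j.
  move=> j hj hq; apply/negP => hE.
  set q := j %/ dX.
  have hq1 : q.+1 * dY <= i by apply: leq_trans hi1; rewrite leq_mul2r hq orbT.
  have := Hc j hj; rewrite (split_cnt _ (ltnW his)).
  rewrite (@eq_in_count _ _ (fun x => (q * dY <= x) && (x < q.+1 * dY))); last first.
    move=> x; rewrite mem_iota add0n => /andP[_ hx].
    by rewrite IH' // divchar.
  rewrite cnt_int //; last by rewrite leq_mul2r leqnSn orbT.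
  rewrite mulSn addnK.
  have : 0 < count (fun i0 => E i0 j) (iota i (s - i)).
    rewrite -has_count; apply/hasP; exists i => //.
    by rewrite mem_iota leqnn subnKC // ltnW.
  move=> h1 h2; move: h2; rewrite -{2}(addn0 dY) => /addnI h3.
  by rewrite h3 in h1.
have [j1 hj1t hj1] : exists2 j1, j1 < t & E i j1.
  have : 0 < count (E i) (iota 0 t) by rewrite Hr.
  rewrite -has_count => /hasP [j1]; rewrite mem_iota add0n => /andP[_ h] hE.
  by exists j1.
set c := p * dX.
have hcj1 : c <= j1.
  rewrite -leq_divRL //; rewrite leqNgt; apply/negP => h.
  by move: (Ha _ hj1t h); rewrite hj1.
have hct : c < t by apply: leq_ltn_trans hj1t.
have hcp : c %/ dX = p by rewrite /c mulnK.
have Hc' : E i c.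
  have := Hc c hct; rewrite (split_cnt _ (ltnW his)).
  rewrite (@eq_in_count _ _ (fun x => (p * dY <= x) && (x < i))); last first.
    move=> x; rewrite mem_iota add0n => /andP[_ hx].
    rewrite IH' // hcp divchar // hx andbT.
    by rewrite (ltn_trans hx hi2) andbT.
  rewrite cnt_int // => h.
  have : 0 < count (fun x => E x c) (iota i (s - i)).
    rewrite lt0n; apply/eqP => h0; move: h; rewrite h0 addn0 => h.
    have : i - p * dY < dY by rewrite ltn_subLR // addnC -mulSn.
    by rewrite h ltnn.
  rewrite -has_count => /hasP [a]; rewrite mem_iota subnKC ?(ltnW his) // => /andP[ha1 ha2] hE.
  exact: (HX i a c j1 ha1 ha2 hcj1 hj1t hj1 hE).
have Hd : forall j, j < t -> E i j -> j < c + dX.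
  move=> j hj hE; rewrite ltnNge; apply/negP => hge.
  have := Hr i his.
  have : dX.+1 <= count (E i) (iota 0 t).
    have <- : c + dX.+1 - c = dX.+1 by rewrite addKn.
    rewrite -(@cnt_int c (c + dX.+1) t) ?leq_addr //; last by rewrite addnS; apply: leq_ltn_trans hge hj.
    apply: cnt_mono => x _ /andP[h1 h2].
    apply: (Hrow i c x j his h1) => //.
    by apply: (@leq_trans (c + dX)) => //; rewrite -ltnS -addnS.
  by move=> h h'; rewrite h' ltnn in h.
have He : forall j, j < t -> c <= j -> j < c + dX -> E i j.
  move=> j hj h1 h2; apply/negPn/negP => hn.
  have hcj : c < j by rewrite ltn_neqAle h1 andbT; apply/eqP => E0; rewrite -E0 Hc' in hn.
  have : count (E i) (iota 0 t) <= j - c.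
    rewrite -(@cnt_int c j t) ?(ltnW hj) //.
    apply: cnt_mono => x; rewrite mem_iota add0n => /andP[_ hx] hEx.
    apply/andP; split.
    + rewrite -leq_divRL // leqNgt; apply/negP => h.
      by move: (Ha _ hx h); rewrite hEx.
    + rewrite ltnNge; apply/negP => hjx.
      by move: hn; rewrite (Hrow i c j x his h1 hjx hx Hc' hEx).
  rewrite Hr // leqNgt ltn_subLR // h2 //.
move=> j hj.
rewrite -/p eq_sym divchar // mulSn -/c addnC.
apply/idP/idP.
- move=> hE; rewrite Hd // andbT.
  rewrite -leq_divRL // leqNgt; apply/negP => h.
  by move: (Ha _ hj h); rewrite hE.
- by move=> /andP[h1 h2]; apply: He.
Qed.

Lemma cardcnt t (Q : pred nat) : #|[set j : 'I_t | Q (val j)]| = count Q (iota 0 t).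
Proof.
rewrite -val_enum_ord count_map cardsE cardE /enum_mem size_filter count_filter.
by apply: eq_count => j; rewrite /= andbT.
Qed.

Definition xsn (T : finType) n (xs : 'I_n -> T) (x0 : T) (m : nat) : T :=
  oapp xs x0 (insub m).

Lemma xsn_val (T : finType) n (xs : 'I_n -> T) x0 (i : 'I_n) : xsn xs x0 i = xs i.
Proof. by rewrite /xsn valK. Qed.

Lemma imsetX (T : finType) (X : {set T}) n (xs : 'I_n -> T) :
  injective xs -> (forall i, xs i \in X) -> n = #|X| -> xs @: setT = X.
Proof.
move=> inj hin hn; apply/eqP; rewrite eqEcard card_imset // cardsT card_ord -hn leqnn andbT.
by apply/subsetP => x /imsetP [i _ ->].
Qed.

Lemma cnt_conv (T : finType) (X : {set T}) n (xs : 'I_n -> T) x0 (Q : pred T) :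
  injective xs -> (forall i, xs i \in X) -> n = #|X| ->
  #|[set x in X | Q x]| = count (fun m => Q (xsn xs x0 m)) (iota 0 n).
Proof.
move=> inj hin hn.
have -> : [set x in X | Q x] = xs @: [set j | Q (xs j)].
  apply/setP => x; rewrite inE -(imsetX inj hin hn).
  apply/idP/idP.
  - move=> /andP[/imsetP [j _ ->] hq]. by apply: imset_f; rewrite inE.
  - move=> /imsetP [j]; rewrite inE => hq ->. by rewrite imset_f ?inE.
rewrite card_imset // -cardcnt.
by apply: eq_card => j; rewrite !inE xsn_val.
Qed.

Lemma xsn_in (T : finType) (X : {set T}) n (xs : 'I_n -> T) x0 m :
  (forall i, xs i \in X) -> m < n -> xsn xs x0 m \in X.
Proof. move=> hin hm; by rewrite -[m]/(val (Ordinal hm)) xsn_val. Qed.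

Lemma xsn_mono (T : finType) n (xs : 'I_n -> T) x0 (g : T -> R) :
  (forall i i' : 'I_n, nat_of_ord i' = (nat_of_ord i).+1 -> Rle (g (xs i)) (g (xs i'))) ->
  forall i i', i <= i' -> i' < n -> Rle (g (xsn xs x0 i)) (g (xsn xs x0 i')).
Proof.
move=> H i i' hii'; rewrite -(subnKC hii').
elim: (i' - i) => [|d IH] h; first by rewrite addn0; apply: Rle_refl.
have h1 : i + d < n by apply: ltn_trans h; rewrite addnS.
apply: Rle_trans (IH h1) _.
rewrite -[i + d]/(val (Ordinal h1)) -[i + d.+1]/(val (Ordinal h)) !xsn_val.
by apply: H; rewrite /= addnS.
Qed.

Lemma ceilK i t d : 0 < t -> 0 < d -> ceil_div (i.+1 * t) (t * d) = (i %/ d).+1.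
Proof.
move=> ht hd; rewrite /ceil_div.
have Hi := divn_eq i d.
have hr := ltn_pmod i hd.
move: (i %/ d) (i %% d) Hi hr => q r Hi hr.
have E : i.+1 * t + (t * d).-1 = q.+1 * (t * d) + (r.+1 * t).-1.
  subst i. nia.
rewrite E divnMDl ?muln_gt0 ?ht ?hd // divn_small ?addn0 //.
nia.
Qed.

Lemma cardK1 (T : finType) (e : rel T) (X Y : {set T}) d :
  (forall x, x \in X -> #|NS e Y x| = d) ->
  #|[set p : T * T | [&& p.1 \in X, p.2 \in Y & e p.1 p.2]]| = #|X| * d.
Proof.
move=> H.
rewrite -sum1_card (partition_big (fun p : T * T => p.1) (mem X)); last first.
  by move=> p; rewrite inE => /and3P[].
rewrite -sum_nat_const; apply: eq_bigr => x hx.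
rewrite sum1_card -(H x hx).
have -> : #|NS e Y x| = #|[set (x, y) | y in NS e Y x]|.
  by rewrite card_imset // => a b [].
apply: eq_card => p; rewrite unfold_in /= !inE.
apply/idP/idP.
- move=> /andP[/and3P[h1 h2 h3] /eqP h4]; apply/imsetP; exists p.2.
  + by rewrite inE h2 -h4.
  + by rewrite -h4; case: p {h1 h2 h3 h4}.
- move=> /imsetP [y]; rewrite inE => /andP[hy hxy] ->.
  by apply/andP; split; [apply/and3P; split|] => //=.
Qed.

Lemma cardK2 (T : finType) (e : rel T) (X Y : {set T}) d :
  symmetric e ->
  (forall y, y \in Y -> #|NS e X y| = d) ->
  #|[set p : T * T | [&& p.1 \in X, p.2 \in Y & e p.1 p.2]]| = #|Y| * d.
Proof.
move=> Hsym H.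
rewrite -(cardK1 H); rewrite -(card_imset _ (@inv_inj _ (fun p : T * T => (p.2, p.1)) _)); last by case.
apply: eq_card => p; rewrite !inE.
apply/idP/idP.
- move=> /imsetP [q]; rewrite inE => /and3P[h1 h2 h3] ->. by rewrite /= h1 h2 Hsym h3.
- move=> /and3P[h1 h2 h3]; apply/imsetP; exists (p.2, p.1); last by case: p {h1 h2 h3}.
  by rewrite inE /= h1 h2 Hsym h3.
Qed.

Lemma part3 (T : finType) (e : rel T) (P : {set {set T}}) f X Y b :
  simple_graph e -> clique_stable e P -> realization e f ->
  X \in P -> Y \in P -> X != Y -> ori_spec f X b -> ori_spec f Y b ->
  1 <= #|[set p : T * T | [&& p.1 \in X, p.2 \in Y & e p.1 p.2]]| ->
  forall (xs : 'I_#|X| -> T) (ys : 'I_#|Y| -> T),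
    injective xs -> (forall i, xs i \in X) ->
    (forall i i' : 'I_#|X|, nat_of_ord i' = (nat_of_ord i).+1 ->
       Rle (f (xs i)).1 (f (xs i')).1) ->
    injective ys -> (forall j, ys j \in Y) ->
    (forall j j' : 'I_#|Y|, nat_of_ord j' = (nat_of_ord j).+1 ->
       Rle (f (ys j)).1 (f (ys j')).1) ->
    forall (i : 'I_#|X|) (j : 'I_#|Y|),
      e (xs i) (ys j) <->
      ceil_div (i.+1 * #|Y|) #|[set p : T * T | [&& p.1 \in X, p.2 \in Y & e p.1 p.2]]|
      = ceil_div (j.+1 * #|X|) #|[set p : T * T | [&& p.1 \in X, p.2 \in Y & e p.1 p.2]]|.
Proof.
move=> [Hsym Hirr] Hcs Hr HX HY HXY [oX _] [oY _] hk xs ys ixs hxs sxs iys hys sys i j.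
have [[x0 y0]] : exists p, p \in [set p : T * T | [&& p.1 \in X, p.2 \in Y & e p.1 p.2]].
  by apply/card_gt0P.
rewrite inE /= => /and3P[hx0 hy0 _].
set dX := #|NS e Y x0|; set dY := #|NS e X y0|.
have rX : forall x, x \in X -> #|NS e Y x| = dX by move=> x hx; apply: (stabP Hcs HX HY hx hx0).
have rY : forall y, y \in Y -> #|NS e X y| = dY by move=> y hy; apply: (stabP Hcs HY HX hy hy0).
have KX := cardK1 rX. have KY := cardK2 Hsym rY.
have hs : 0 < #|X| by apply/card_gt0P; exists x0.
have ht : 0 < #|Y| by apply/card_gt0P; exists y0.
have hdX : 0 < dX by move: hk; rewrite KX muln_gt0 => /andP[].
have hdY : 0 < dY by move: hk; rewrite KY muln_gt0 => /andP[].
pose xn := xsn xs x0. pose yn := xsn ys y0.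
have xin : forall a, a < #|X| -> xn a \in X by move=> a ha; apply: xsn_in.
have yin : forall c, c < #|Y| -> yn c \in Y by move=> c hc; apply: xsn_in.
have mx1 : forall a a', a <= a' -> a' < #|X| -> Rle (f (xn a)).1 (f (xn a')).1.
  move=> a a' h1 h2; exact: (@xsn_mono _ _ xs x0 (fun z => (f z).1) sxs a a' h1 h2).
have my1 : forall c c', c <= c' -> c' < #|Y| -> Rle (f (yn c)).1 (f (yn c')).1.
  move=> a a' h1 h2; exact: (@xsn_mono _ _ ys y0 (fun z => (f z).1) sys a a' h1 h2).
have mx2 : forall a a', a <= a' -> a' < #|X| ->
    Rle (Rmult b (f (xn a)).2) (Rmult b (f (xn a')).2).
  move=> a a' h1 h2; apply: (proj1 ((proj2 oX) _ _ (xin _ (leq_ltn_trans h1 h2)) (xin _ h2))).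
  exact: mx1.
have my2 : forall c c', c <= c' -> c' < #|Y| ->
    Rle (Rmult b (f (yn c)).2) (Rmult b (f (yn c')).2).
  move=> c c' h1 h2; apply: (proj1 ((proj2 oY) _ _ (yin _ (leq_ltn_trans h1 h2)) (yin _ h2))).
  exact: my1.
have adj : forall a c, a < #|X| -> c < #|Y| -> (e (xn a) (yn c) <-> bnd (f (xn a)) (f (yn c))).
  move=> a c ha hc; apply: adjE Hr _; exact: (disjP Hcs HX HY HXY (xin _ ha) (yin _ hc)).
have hb := proj1 oX.
have HB := @block #|X| #|Y| dX dY (fun a c => e (xn a) (yn c)) hdX hdY.
have HB' : forall a, a < #|X| -> forall c, c < #|Y| -> e (xn a) (yn c) = (a %/ dY == c %/ dX).
  apply: HB.
  - move=> a ha; rewrite -(rX _ (xin _ ha)).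
    exact: (esym (cnt_conv y0 (e (xn a)) iys hys erefl)).
  - move=> c hc; rewrite -(rY _ (yin _ hc)).
    rewrite (cnt_conv x0 (e (yn c)) ixs hxs erefl).
    by apply: eq_count => a; rewrite /= Hsym.
  - move=> a a' c c' h1 h2 h3 h4 E1 E2.
    have ha : a < #|X| by apply: leq_ltn_trans h2.
    have hc : c < #|Y| by apply: leq_ltn_trans h4.
    apply/(adj _ _ ha hc).
    have := proj1 (adj _ _ ha h4) E1. have := proj1 (adj _ _ h2 hc) E2.
    have := mx1 _ _ h1 h2. have := mx2 _ _ h1 h2. have := my1 _ _ h3 h4. have := my2 _ _ h3 h4.
    rewrite /bnd; case: hb => ->; lra.
  - move=> a c c' c'' ha h1 h2 h3 E1 E2.
    have hc' : c' < #|Y| by apply: leq_ltn_trans h3.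
    have hc : c < #|Y| by apply: leq_ltn_trans hc'.
    apply/(adj _ _ ha hc').
    have := proj1 (adj _ _ ha hc) E1. have := proj1 (adj _ _ ha h3) E2.
    have := my1 _ _ h1 hc'. have := my2 _ _ h1 hc'. have := my1 _ _ h2 h3. have := my2 _ _ h2 h3.
    rewrite /bnd; case: hb => ->; lra.
have c1 : ceil_div (i.+1 * #|Y|) #|[set p : T * T | [&& p.1 \in X, p.2 \in Y & e p.1 p.2]]|
    = (i %/ dY).+1 by rewrite KY ceilK.
have c2 : ceil_div (j.+1 * #|X|) #|[set p : T * T | [&& p.1 \in X, p.2 \in Y & e p.1 p.2]]|
    = (j %/ dX).+1 by rewrite KX ceilK.
rewrite c1 c2 -(xsn_val xs x0 i) -(xsn_val ys y0 j) -/xn -/yn HB' //.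
split; first by move/eqP ->.
by move=> [->].
Qed.

Theorem mainTheorem14 (T : finType) (e : rel T) (P : {set {set T}})
    (f : T -> (R * R)%type) :
  simple_graph e -> twin_free e -> clique_stable e P -> realization e f ->
  (* (1) existence of an orientation, and uniqueness when |X| >= 2 *)
  (forall X, X \in P -> exists b, is_orientation f X b) /\
  (forall X, X \in P -> 1 < #|X| ->
     forall b b', is_orientation f X b -> is_orientation f X b' -> b = b') /\
  (* (2) *)
  (forall X Y bX bY, X \in P -> Y \in P -> ori_spec f X bX -> ori_spec f Y bY ->
     bX <> bY ->
     (forall x y, x \in X -> y \in Y -> e x y) \/
     (forall x y, x \in X -> y \in Y -> ~~ e x y)) /\
  (* (3) *)
  (forall X Y b, X \in P -> Y \in P -> X != Y -> ori_spec f X b -> ori_spec f Y b ->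
     1 <= #|[set p : T * T | [&& p.1 \in X, p.2 \in Y & e p.1 p.2]]| ->
     forall (xs : 'I_#|X| -> T) (ys : 'I_#|Y| -> T),
       injective xs -> (forall i, xs i \in X) ->
       (forall i i' : 'I_#|X|, nat_of_ord i' = (nat_of_ord i).+1 ->
          Rle (f (xs i)).1 (f (xs i')).1) ->
       injective ys -> (forall j, ys j \in Y) ->
       (forall j j' : 'I_#|Y|, nat_of_ord j' = (nat_of_ord j).+1 ->
          Rle (f (ys j)).1 (f (ys j')).1) ->
       forall (i : 'I_#|X|) (j : 'I_#|Y|),
         e (xs i) (ys j) <->
         ceil_div (i.+1 * #|Y|) #|[set p : T * T | [&& p.1 \in X, p.2 \in Y & e p.1 p.2]]|
         = ceil_div (j.+1 * #|X|) #|[set p : T * T | [&& p.1 \in X, p.2 \in Y & e p.1 p.2]]|).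
Proof.
move=> Hs Htf Hcs Hr.
split; first by move=> X HX; exact: (ori_exists Hs Htf Hcs Hr HX).
split; first by move=> X HX h b b'; exact: (ori_unique Htf Hr h).
split; first by move=> X Y bX bY HX HY oX oY hne; exact: (part2 Hs Htf Hcs Hr HX HY oX oY hne).
move=> X Y b HX HY HXY oX oY hk; exact: (part3 Hs Hcs Hr HX HY HXY oX oY hk).
Qed.
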